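(* Let $R$ be a ring, $S\in\max\mathrm{Den}_l(R)$ and $T$ a left denominator set of $R$. Then $T\subseteq S$ if and only if $\mathrm{ass}(T)\subseteq\mathrm{ass}(S)$.
   Context: All rings are associative with $1$. A multiplicative subset $S$ of $R$ ($1\in S$, $0\notin S$, closed under multiplication) is a left Ore set if $Sr\cap Rs\neq\emptyset$ for all $r\in R$, $s\in S$; for it, $\mathrm{ass}(S):=\{r\in R: sr=0\text{ for some } s\in S\}$. A left Ore set $S$ is a left denominator set if $rs=0$ ($r\in R$, $s\in S$) implies $tr=0$ for some $t\in S$. $\max\mathrm{Den}_l(R)$ is the set of maximal elements, under inclusion, of the set of left denominator sets of $R$. *)

(* Defs.v *)
From mathcomp Require Import all_boot all_algebra.
Set Implicit Arguments. Unset Strict Implicit. Unset Printing Implicit Defensive.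
Import GRing.Theory.
Local Open Scope ring_scope.

(* Subsets of a ring are predicates R -> Prop.  Rings: associative with 1,
   possibly noncommutative (pzRingType, allowing even the zero ring). *)

Definition subset_of (R : Type) (A B : R -> Prop) : Prop := forall x, A x -> B x.

Definition mult_subset (R : pzRingType) (S : R -> Prop) : Prop :=
  [/\ S 1, ~ S 0 & forall a b, S a -> S b -> S (a * b)].

Definition left_Ore (R : pzRingType) (S : R -> Prop) : Prop :=
  mult_subset S /\
  forall (r s : R), S s -> exists s' r', S s' /\ s' * r = r' * s.

Definition ass (R : pzRingType) (S : R -> Prop) : R -> Prop :=
  fun r => exists s, S s /\ s * r = 0.

Definition left_den (R : pzRingType) (S : R -> Prop) : Prop :=
  left_Ore S /\
  forall (r s : R), S s -> r * s = 0 -> exists t, S t /\ t * r = 0.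

Definition maxDen_l (R : pzRingType) (S : R -> Prop) : Prop :=
  left_den S /\
  forall T : R -> Prop, left_den T -> subset_of S T -> subset_of T S.

(* Main.v *)
Require Import Defs.
From mathcomp Require Import all_boot all_algebra.
Import GRing.Theory.
Local Open Scope ring_scope.
Set Implicit Arguments. Unset Strict Implicit.

Inductive gen (R : pzRingType) (S T : R -> Prop) : R -> Prop :=
| gen1 : gen S T 1
| genS w s : gen S T w -> S s -> gen S T (w * s)
| genT w t : gen S T w -> T t -> gen S T (w * t).

Lemma gen_mul (R : pzRingType) (S T : R -> Prop) a b :
  gen S T a -> gen S T b -> gen S T (a * b).
Proof.
move=> Ha; elim=> [|w s _ IH Hs|w t _ IH Ht]; first by rewrite mulr1.
- by rewrite mulrA; apply: genS.
- by rewrite mulrA; apply: genT.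
Qed.

Theorem corollary2p3 (R : pzRingType) (S T : R -> Prop) :
  maxDen_l S -> left_den T ->
  (subset_of T S <-> subset_of (ass T) (ass S)).
Proof.
move=> [[[[S1 S0 SM] SO] SR] Smax] [[[T1 T0 TM] TO] TR].
split.
  move=> TS x [t [Ht Htx]]; by exists t; split => //; apply: TS.
move=> AS.
have HS s : S s -> gen S T s by move=> Hs; rewrite -[s]mul1r; apply: genS => //; exact: gen1.
have HT t : T t -> gen S T t by move=> Ht; rewrite -[t]mul1r; apply: genT => //; exact: gen1.
have P : forall w, gen S T w -> forall s t, S s -> T t -> s * t * w <> 0.
  move=> w0; elim=> [|w u _ IH Hu|w u _ IH Hu] s t Hs Ht.
  - rewrite mulr1 => H.
    have [t' [Ht' Hts]] := TR _ _ Ht H.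
    have [s'' [Hs'' Hs''s]] := AS s (ex_intro _ t' (conj Ht' Hts)).
    by apply: S0; rewrite -Hs''s; apply: SM.
  - rewrite mulrA => H.
    have [s' [Hs' H']] := SR _ _ Hu H.
    by apply: (IH (s' * s) t (SM _ _ Hs' Hs) Ht); rewrite -!mulrA -H' !mulrA.
  - rewrite mulrA => H.
    have [t' [Ht' H']] := TR _ _ Hu H.
    have [s'' [Hs'' H'']] := AS (s * t * w) (ex_intro _ t' (conj Ht' H')).
    by apply: (IH (s'' * s) t (SM _ _ Hs'' Hs) Ht); rewrite -!mulrA -H'' !mulrA.
have Uden : left_den (gen S T).
  split; first split; first split.
  - exact: gen1.
  - move=> H0; apply: (P _ H0 1 1 S1 T1); by rewrite !mulr0.
  - exact: gen_mul.
  - move=> r u Hu; elim: Hu r => [|w x Hw IH Hx|w x Hw IH Hx] r.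
    + by exists 1, r; split; [exact: gen1 | rewrite mul1r mulr1].
    + have [s1 [r1 [Hs1 E1]]] := SO r x Hx.
      have [s2 [r2 [Hs2 E2]]] := IH r1.
      exists (s2 * s1), r2; split; first by apply: gen_mul => //; exact: HS.
      by rewrite -mulrA E1 mulrA E2 mulrA.
    + have [s1 [r1 [Hs1 E1]]] := TO r x Hx.
      have [s2 [r2 [Hs2 E2]]] := IH r1.
      exists (s2 * s1), r2; split; first by apply: gen_mul => //; exact: HT.
      by rewrite -mulrA E1 mulrA E2 mulrA.
  - move=> r u Hu; elim: Hu r => [|w x Hw IH Hx|w x Hw IH Hx] r.
    + by rewrite mulr1 => ->; exists 1; split; [exact: gen1|rewrite mulr0].
    + rewrite mulrA => H; have [v [Hv Hv']] := SR _ _ Hx H.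
      rewrite mulrA in Hv'; have [v' [Hv'1 Hv'2]] := IH _ Hv'.
      exists (v' * v); split; first by apply: gen_mul => //; exact: HS.
      by rewrite -mulrA.
    + rewrite mulrA => H; have [v [Hv Hv']] := TR _ _ Hx H.
      rewrite mulrA in Hv'; have [v' [Hv'1 Hv'2]] := IH _ Hv'.
      exists (v' * v); split; first by apply: gen_mul => //; exact: HT.
      by rewrite -mulrA.
have := Smax _ Uden HS.
by move=> US t Ht; apply: US; apply: HT.
Qed.
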